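(* Let $\theta:\mathbb{A}\to\mathbb{A}^\lambda$ be a primitive substitution satisfying the standing assumptions, and let $\Theta=\theta\vee\widetilde\theta:\overline{\mathcal{X}}\to\overline{\mathcal{X}}^\lambda$. Then $\Theta$ is primitive and $h(\Theta)=h(\theta)$.
   Context: Substitution $\theta:\mathbb{A}\to\mathbb{A}^\lambda$, $\lambda\ge2$; primitive: some iterate $\theta^k(a)$ contains all letters for each $a$. Standing assumptions: $\theta(a_0)_0=a_0$, $\theta$ injective on letters, subshift infinite. Height of a primitive substitution $\zeta$: $h(\zeta)=\max\{m\ge1:\gcd(m,\lambda)=1,\ m\mid\gcd\{r\ge1:v[r]=v[0]\}\}$ where $v$ is a fixed point of a suitable power of $\zeta$ (independent of choices). Let $\mathcal{X}$ be the set of $M\subset\mathbb{A}$ with $|M|=c(\theta):=\min_{k\ge1,0\le j<\lambda^k}|\{\theta^k(a)_j:a\in\mathbb{A}\}|$ and $M=\{\theta^k(a)_j:a\in\mathbb{A}\}$ for some $k\ge1$, $0\le j<\lambda^k$; $\widetilde\theta:\mathcal{X}\to\mathcal{X}^\lambda$, $\widetilde\theta(M)_j=\{\theta(a)_j:a\in M\}$. Let $\overline{\mathcal{X}}=\{(a,M):M\in\mathcal{X},\ a\in M\}$ and $\Theta(a,M)_j=(\theta(a)_j,\widetilde\theta(M)_j)$ for $0\le j<\lambda$ (this maps $\overline{\mathcal{X}}$ into $\overline{\mathcal{X}}^\lambda$). *)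

(* Defs.v *)
From HB Require Import structures.
From mathcomp Require Import all_boot all_order ssralg ssrint.
Set Implicit Arguments. Unset Strict Implicit. Unset Printing Implicit Defensive.

(* A substitution of constant length lam on an alphabet T is a map
   z : T -> seq T with size (z a) = lam for all letters a.
   Words are seq T; z extends to words by concatenation. *)

Definition subst_word (T : Type) (z : T -> seq T) (w : seq T) : seq T :=
  flatten (map z w).

Definition subst_iter (T : Type) (z : T -> seq T) (k : nat) (w : seq T) : seq T :=
  iter k (subst_word z) w.

Definition letter_iter (T : Type) (z : T -> seq T) (k : nat) (a : T) : seq T :=
  subst_iter z k [:: a].

Definition primitive_on (T : eqType) (z : T -> seq T) (D : T -> Prop) : Prop :=
  forall a, D a -> exists2 k, 0 < k & forall b, D b -> b \in letter_iter z k a.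

(* The one-sided fixed point v of z^p starting with a (when z^p(a)_0 = a):
   v[r] = z^(p*(r+1))(a)_r  (the words z^(pn)(a) are nested prefixes). *)
Definition fixpt (T : Type) (z : T -> seq T) (p : nat) (a : T) (r : nat) : T :=
  nth a (letter_iter z (p * r.+1) a) r.

Definition divides_return_gcd (T : eqType) (z : T -> seq T) (p : nat) (a : T)
    (m : nat) : Prop :=
  forall r, 0 < r -> fixpt z p a r = fixpt z p a 0 -> m %| r.

Definition is_height (T : eqType) (z : T -> seq T) (D : T -> Prop) (lam : nat)
    (h : nat) : Prop :=
  forall p a, 0 < p -> D a -> nth a (letter_iter z p a) 0 = a ->
    [/\ 0 < h, coprime h lam, divides_return_gcd z p a h &
        forall m, 0 < m -> coprime m lam -> divides_return_gcd z p a m -> m <= h].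

Definition in_language (A : eqType) (theta : A -> seq A) (w : seq A) : Prop :=
  exists k a, infix w (letter_iter theta k a).

Definition in_subshift (A : eqType) (theta : A -> seq A) (x : int -> A) : Prop :=
  forall (i : int) (n : nat),
    in_language theta [seq x (i + (j%:Z))%R | j <- iota 0 n].

Definition subshift_infinite (A : eqType) (theta : A -> seq A) : Prop :=
  ~ exists n (f : 'I_n -> int -> A),
      forall x, in_subshift theta x -> exists i, x = f i.

Definition column (A : finType) (theta : A -> seq A) (k j : nat) : {set A} :=
  [set nth a (letter_iter theta k a) j | a : A].

Definition in_Xset (A : finType) (theta : A -> seq A) (lam : nat) (M : {set A})
    : Prop :=
  (exists k j, [/\ 0 < k, j < lam ^ k & M = column theta k j]) /\
  (forall k j, 0 < k -> j < lam ^ k -> #|M| <= #|column theta k j|).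

Definition in_Xbar (A : finType) (theta : A -> seq A) (lam : nat)
    (x : A * {set A}) : Prop :=
  in_Xset theta lam x.2 /\ x.1 \in x.2.

Definition Theta (A : finType) (theta : A -> seq A) (lam : nat)
    (x : A * {set A}) : seq (A * {set A}) :=
  [seq (nth x.1 (theta x.1) j, [set nth b (theta b) j | b in x.2]) | j <- iota 0 lam].

(* Main.v *)
Require Import Defs.
From HB Require Import structures.
From mathcomp Require Import all_boot all_order ssralg ssrint.
From mathcomp Require Import zify.
From Stdlib Require Import Classical.
Set Implicit Arguments. Unset Strict Implicit. Unset Printing Implicit Defensive.
Lemma lt_mul_add (i a t b : nat) : i < a -> t < b -> i * b + t < a * b.
Proof. move=> h1 h2; nia. Qed.

Section Gen.
Variables (T : eqType) (z : T -> seq T) (lam : nat).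
Hypothesis Hlen : forall x, size (z x) = lam.

Lemma letter_iterS n a : letter_iter z n.+1 a = flatten (map z (letter_iter z n a)).
Proof. by []. Qed.

Lemma subst_iter_cat n w1 w2 :
  subst_iter z n (w1 ++ w2) = subst_iter z n w1 ++ subst_iter z n w2.
Proof.
elim: n => [//|n IH]; rewrite /subst_iter !iterS -/(subst_iter z n _) IH.
by rewrite /subst_word map_cat flatten_cat.
Qed.

Lemma subst_iterE n w : subst_iter z n w = flatten (map (letter_iter z n) w).
Proof.
elim: w => [|x w IH]; first by elim: n => [//|n IH]; rewrite /subst_iter iterS -/(subst_iter z n _) IH.
by rewrite -cat1s subst_iter_cat IH.
Qed.

Lemma letter_iterD n m a :
  letter_iter z (n + m) a = flatten (map (letter_iter z m) (letter_iter z n a)).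
Proof. by rewrite -subst_iterE /letter_iter /subst_iter addnC iterD. Qed.

Lemma size_flatten_const (U V : Type) (f : U -> seq V) L w :
  (forall x, size (f x) = L) -> size (flatten (map f w)) = L * size w.
Proof.
move=> hf; elim: w => [|x w IH] /=; first by rewrite muln0.
by rewrite size_cat IH hf mulnS.
Qed.

Lemma size_letter_iter n a : size (letter_iter z n a) = lam ^ n.
Proof.
elim: n => [//|n IH]; rewrite letter_iterS (size_flatten_const _ Hlen) IH.
by rewrite expnS.
Qed.

Lemma nth_flatten_const (U V : Type) (f : U -> seq V) L w i t (d : V) (e : U) :
  (forall x, size (f x) = L) -> i < size w -> t < L ->
  nth d (flatten (map f w)) (i * L + t) = nth d (f (nth e w i)) t.
Proof.
move=> hf; elim: w i => [//|x w IH] [|i] /= hi ht.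
  by rewrite mul0n add0n nth_cat hf ht.
rewrite nth_cat hf mulSn -addnA ltnNge leq_addr /= addKn IH //.
Qed.

Lemma nth_letter_iterD n m a i t (d e : T) :
  i < lam ^ n -> t < lam ^ m ->
  nth d (letter_iter z (n + m) a) (i * lam ^ m + t) =
  nth d (letter_iter z m (nth e (letter_iter z n a) i)) t.
Proof.
move=> hi ht; rewrite letter_iterD (@nth_flatten_const _ _ _ (lam ^ m) _ i t d e) //.
  by move=> x; rewrite size_letter_iter.
by rewrite size_letter_iter.
Qed.

Lemma mem_letter_iterD n m a c d :
  c \in letter_iter z n a -> d \in letter_iter z m c -> d \in letter_iter z (n + m) a.
Proof.
move=> hc hd.
have hi : index c (letter_iter z n a) < lam ^ n by rewrite -(size_letter_iter n a) index_mem.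
have ht : index d (letter_iter z m c) < lam ^ m by rewrite -(size_letter_iter m c) index_mem.
have := @nth_letter_iterD n m a _ _ d c hi ht.
rewrite (nth_index c hc) (nth_index d hd) => <-.
apply: mem_nth; rewrite size_letter_iter expnD; exact: lt_mul_add.
Qed.

Lemma mem_letter_iter_nth n a t d : t < lam ^ n -> nth d (letter_iter z n a) t \in letter_iter z n a.
Proof. by move=> ht; apply: mem_nth; rewrite size_letter_iter. Qed.


Hypothesis Hlam : 1 < lam.
Variables (p : nat) (a : T).
Hypothesis Hp : 0 < p.
Hypothesis Hfix : nth a (letter_iter z p a) 0 = a.

Lemma lam_gt0 : 0 < lam. Proof. exact: ltnW. Qed.

Lemma fix_prefix N k r d : r < lam ^ (p * N) ->
  nth d (letter_iter z (p * (N + k)) a) r = nth d (letter_iter z (p * N) a) r.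
Proof.
move=> hr; elim: k => [|k IH]; first by rewrite addn0.
have hr' : r < lam ^ (p * (N + k)).
  apply: (leq_trans hr); apply: leq_pexp2l; [exact: lam_gt0 | by rewrite leq_mul2l leq_addr orbT].
rewrite addnS mulnS -(add0n r) -(mul0n (lam ^ (p * (N + k)))).
rewrite (@nth_letter_iterD p _ a _ _ d a) ?expn_gt0 ?lam_gt0 // Hfix mul0n add0n IH //.
Qed.

Lemma fixpt_nth N r : r < lam ^ (p * N) -> fixpt z p a r = nth a (letter_iter z (p * N) a) r.
Proof.
move=> hr; rewrite /fixpt.
have hr1 : r < lam ^ (p * r.+1).
  apply: (leq_trans (ltn_expl r Hlam)); apply: leq_pexp2l; first exact: lam_gt0.
  by apply: (leq_trans (leqnSn r)); rewrite leq_pmull.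
case: (leqP N r.+1) => hN.
  by rewrite -(subnKC hN) fix_prefix.
by rewrite -(subnKC (ltnW hN)) fix_prefix.
Qed.

Lemma fixpt0 : fixpt z p a 0 = a.
Proof. by rewrite /fixpt muln1 Hfix. Qed.

Lemma fixpt_self E i t : p %| E -> t < lam ^ E ->
  fixpt z p a (i * lam ^ E + t) = nth a (letter_iter z E (fixpt z p a i)) t.
Proof.
case/dvdnP=> e ->; rewrite mulnC => ht.
have hi : i < lam ^ (p * i.+1).
  apply: (leq_trans (ltn_expl i Hlam)); apply: leq_pexp2l; first exact: lam_gt0.
  by apply: (leq_trans (leqnSn i)); rewrite leq_pmull.
rewrite (fixpt_nth (N := i.+1 + e)); last first.
  by rewrite mulnDr expnD; apply: lt_mul_add.
rewrite mulnDr (@nth_letter_iterD _ _ a _ _ a a) //.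
Qed.

Lemma cancel_mod_le m L i i' : coprime m L -> i' <= i -> i * L = i' * L %[mod m] -> i = i' %[mod m].
Proof.
move=> co le /eqP; rewrite eqn_mod_dvd ?leq_mul2r ?le ?orbT // -mulnBl Gauss_dvdl //.
by rewrite -eqn_mod_dvd // => /eqP.
Qed.

Lemma cancel_mod m L i i' : coprime m L -> i * L = i' * L %[mod m] -> i = i' %[mod m].
Proof.
move=> co; case: (leqP i' i) => h; first exact: cancel_mod_le.
by move=> /esym /(cancel_mod_le co (ltnW h)) ->.
Qed.

Lemma fix_ret0 m q : divides_return_gcd z p a m -> fixpt z p a q = a -> q = 0 %[mod m].
Proof.
move=> hd; case: q => [//|q] h.
by rewrite mod0n; apply/eqP; rewrite -/(dvdn _ _); apply: hd; rewrite // fixpt0.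
Qed.

Lemma coloring m : coprime m lam -> divides_return_gcd z p a m ->
  (forall i, exists E s, [/\ p %| E, s < lam ^ E & nth a (letter_iter z E (fixpt z p a i)) s = a]) ->
  forall i i', fixpt z p a i = fixpt z p a i' -> i = i' %[mod m].
Proof.
move=> co hd hocc i i' heq.
have [E [s [hE hs hes]]] := hocc i.
have h1 : fixpt z p a (i * lam ^ E + s) = a by rewrite fixpt_self.
have h2 : fixpt z p a (i' * lam ^ E + s) = a by rewrite fixpt_self // -heq.
have := fix_ret0 hd h1; rewrite -(fix_ret0 hd h2) => /eqP.
rewrite eqn_modDr => /eqP; apply: cancel_mod.
by rewrite coprimeXr.
Qed.
End Gen.

Lemma finite_choice (X : finType) (P : X -> nat -> Prop) :
  (forall x, exists n, P x n) -> (forall x n n', n <= n' -> P x n -> P x n') ->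
  exists N, forall x, P x N.
Proof.
move=> hex hmon.
suff [N HN] : exists N, forall x, x \in enum X -> P x N.
  by exists N => x; apply: HN; rewrite mem_enum.
elim: (enum X) => [|y s [N HN]]; first by exists 0.
have [n hn] := hex y.
exists (maxn n N) => x; rewrite inE => /orP[/eqP -> | hx].
  by apply: (hmon _ n) => //; rewrite leq_maxl.
by apply: (hmon _ N); rewrite ?leq_maxr //; apply: HN.
Qed.

Lemma exists_max (P : nat -> Prop) n0 B : P n0 -> (forall m, P m -> m <= B) ->
  exists h, P h /\ forall m, P m -> m <= h.
Proof.
move=> h0 hB.
suff : forall k n, P n -> B - n <= k -> exists h, P h /\ forall m, P m -> m <= h.
  by move=> /(_ _ n0 h0 (leqnn _)).
elim=> [|k IH] n hn hk.
  exists n; split=> // m hm; have := hB m hm; lia.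
case: (classic (exists m, P m /\ n < m)) => [[m [hm lt]]|nex].
  apply: (IH m hm); have := hB m hm; lia.
exists n; split=> // m hm; case: (leqP m n) => // lt; exfalso; apply: nex; by exists m.
Qed.

Section Main.
Variables (A : finType) (lam : nat) (theta : A -> seq A).
Hypothesis Hlam : 2 <= lam.
Hypothesis Hlen : forall a, size (theta a) = lam.
Hypothesis Hprim : primitive_on theta (fun _ => True).
Variable a0 : A.
Hypothesis Ha0 : nth a0 (theta a0) 0 = a0.

Lemma letter_iter1 (T : Type) (z : T -> seq T) a : letter_iter z 1 a = z a.
Proof. by rewrite /letter_iter /subst_iter /= /subst_word /= cats0. Qed.

Lemma lam_pos : 0 < lam. Proof. by apply: leq_trans Hlam. Qed.

Lemma a0_in : a0 \in letter_iter theta 1 a0.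
Proof. by rewrite letter_iter1 -{1}Ha0 mem_nth // Hlen lam_pos. Qed.

Lemma a0_mono n n' b : n <= n' -> a0 \in letter_iter theta n b -> a0 \in letter_iter theta n' b.
Proof.
move=> /subnKC <-; elim: (n' - n) => [|k IH] h; first by rewrite addn0.
by rewrite addnS -addn1; apply: (mem_letter_iterD Hlen (IH h) a0_in).
Qed.

Lemma unif_prim : exists K, forall n, K <= n -> forall b c, c \in letter_iter theta n b.
Proof.
have [K0 HK0] : exists K0, forall b, forall n, K0 <= n -> a0 \in letter_iter theta n b.
  apply: (finite_choice (P := fun b K => forall n, K <= n -> a0 \in letter_iter theta n b)).
    move=> b; have [k _ hk] := Hprim (a := b) I.
    by exists k => n hn; apply: (a0_mono hn); apply: hk.
  by move=> b n n' hnn' h m hm; apply: h; apply: leq_trans hm.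
have [k1 _ hk1] := Hprim (a := a0) I.
exists (K0 + k1) => n hn b c.
have hk1n : k1 <= n by apply: leq_trans hn; apply: leq_addl.
rewrite -(subnK hk1n).
apply: (mem_letter_iterD Hlen (HK0 b _ _) (hk1 c I)).
by rewrite leq_subRL // addnC.
Qed.

Definition colfun n t (b : A) := nth b (letter_iter theta n b) t.
Definition col n t (S : {set A}) := [set colfun n t b | b in S].

Lemma nth_colfun n t b d : t < lam ^ n -> nth d (letter_iter theta n b) t = colfun n t b.
Proof. by move=> ht; apply: set_nth_default; rewrite (size_letter_iter Hlen). Qed.

Lemma colfunD n k i t b : i < lam ^ n -> t < lam ^ k ->
  colfun (n + k) (i * lam ^ k + t) b = colfun k t (colfun n i b).
Proof.
move=> hi ht; rewrite {1}/colfun (nth_letter_iterD Hlen _ b b hi ht).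
by rewrite nth_colfun.
Qed.

Lemma colD n k i t S : i < lam ^ n -> t < lam ^ k ->
  col (n + k) (i * lam ^ k + t) S = col k t (col n i S).
Proof.
move=> hi ht; rewrite /col -imset_comp; apply: eq_imset => b /=.
exact: colfunD.
Qed.

Lemma colT k j : column theta k j = col k j [set: A].
Proof.
apply/setP=> x; apply/imsetP/imsetP => [][b _ ->]; by exists b.
Qed.

Definition Xs := in_Xset theta lam.

Lemma col_X n t M : Xs M -> t < lam ^ n -> Xs (col n t M) /\ #|col n t M| = #|M|.
Proof.
move=> [[k [j [hk hj ->]]] hmin] ht.
have e : col n t (column theta k j) = column theta (k + n) (j * lam ^ n + t).
  by rewrite !colT colD.
have hcol : 0 < k + n /\ j * lam ^ n + t < lam ^ (k + n).
  by split; [rewrite addn_gt0 hk | rewrite expnD; apply: lt_mul_add].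
have le1 : #|col n t (column theta k j)| <= #|column theta k j| by apply: leq_imset_card.
have le2 : #|column theta k j| <= #|col n t (column theta k j)|.
  by rewrite e; apply: hmin; case: hcol.
split; last by apply/eqP; rewrite eqn_leq le1 le2.
split; first by exists (k + n), (j * lam ^ n + t); case: hcol.
by move=> k' j' hk' hj'; apply: leq_trans le1 _; apply: hmin.
Qed.

Lemma col_sync k0 j0 M : 0 < k0 -> j0 < lam ^ k0 -> Xs (column theta k0 j0) -> Xs M ->
  col k0 j0 M = column theta k0 j0.
Proof.
move=> hk hj [_ hmin] hM.
have [[[k [j [hk' hj' e]]] _] _] := col_X hM hj.
apply/eqP; rewrite eqEcard; apply/andP; split.
  by rewrite colT; apply: imsetS; apply: subsetT.
by rewrite e; apply: hmin.
Qed.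

Lemma r_lt_pow p r : 0 < p -> r < lam ^ (p * r.+1).
Proof.
move=> hp; apply: (leq_trans (ltn_expl r Hlam)); apply: leq_pexp2l; first exact: lam_pos.
by apply: (leq_trans (leqnSn r)); rewrite leq_pmull.
Qed.

Notation Th := (Theta theta lam).
Notation Xb := (in_Xbar theta lam).

Lemma size_Th x : size (Th x) = lam.
Proof. by rewrite /Theta size_map size_iota. Qed.

Lemma Th_nth x j d : j < lam -> nth d (Th x) j = (colfun 1 j x.1, col 1 j x.2).
Proof.
move=> hj; rewrite /Theta (nth_map 0) ?size_iota // nth_iota // add0n.
congr (_, _); first by rewrite /colfun letter_iter1.
by apply: eq_imset => b; rewrite /colfun letter_iter1.
Qed.

Lemma Th_iter n x t d : t < lam ^ n ->
  nth d (letter_iter Th n x) t = (colfun n t x.1, col n t x.2).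
Proof.
elim: n x t => [|n IH] x t ht.
  move: ht; rewrite expn0 ltnS leqn0 => /eqP ->.
  case: x => b S /=; congr (_, _); rewrite /col /colfun /=.
  by rewrite imset_id.
have hd : forall i j, i < lam ^ n -> j < lam ->
    nth d (letter_iter Th (n + 1) x) (i * lam ^ 1 + j) =
    (colfun (n + 1) (i * lam ^ 1 + j) x.1, col (n + 1) (i * lam ^ 1 + j) x.2).
  move=> i j hi hj.
  rewrite (nth_letter_iterD size_Th _ d d hi) ?expn1 // letter_iter1 Th_nth // IH //=.
  by rewrite -colfunD ?expn1 // -colD ?expn1.
rewrite -addn1 (divn_eq t lam) -{2 4 6}(expn1 lam); apply: hd.
  by rewrite ltn_divLR ?lam_pos // -expnSr.
by rewrite ltn_mod lam_pos.
Qed.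

Lemma fixTh p x r : 0 < p -> fixpt Th p x r = (fixpt theta p x.1 r, col (p * r.+1) r x.2).
Proof. by move=> hp; rewrite /fixpt Th_iter // r_lt_pow. Qed.

Lemma Xb_closed n x t d : Xb x -> t < lam ^ n -> Xb (nth d (letter_iter Th n x) t).
Proof.
move=> [hX hin] ht; rewrite Th_iter //; split=> /=.
  by case: (col_X hX ht).
by apply: imset_f.
Qed.

Lemma Th_prim_target y : Xb y ->
  exists B, forall x, Xb x -> forall n, B <= n -> y \in letter_iter Th n x.
Proof.
case: y => b N; rewrite /in_Xbar /= => -[[[k0 [j0 [hk hj eN]]] hmin] hb].
have [K HK] := unif_prim.
move: hb; rewrite {1}eN => /imsetP [c _ ->].
exists (K + k0) => x [hX _] n hn.
have hk0n : k0 <= n by apply: leq_trans hn; apply: leq_addl.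
have hKn : K <= n - k0 by lia.
rewrite -(subnK hk0n).
set n1 := n - k0 in hKn *.
have hc := HK n1 hKn x.1 c.
set i := index c (letter_iter theta n1 x.1).
have hi : i < lam ^ n1 by rewrite -(size_letter_iter Hlen n1 x.1) index_mem.
have hq : i * lam ^ k0 + j0 < lam ^ (n1 + k0) by rewrite expnD; apply: lt_mul_add.
have <- : nth (b, N) (letter_iter Th (n1 + k0) x) (i * lam ^ k0 + j0) = (colfun k0 j0 c, N).
  have hci : colfun n1 i x.1 = c by rewrite /colfun /i nth_index.
  rewrite Th_iter // colfunD // colD // hci.
  congr (_, _); rewrite eN; apply: col_sync => //.
    by split; [exists k0, j0 | rewrite -eN].
  by case: (col_X hX hi).
by apply: mem_nth; rewrite (size_letter_iter size_Th).
Qed.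

Lemma Th_primitive : primitive_on Th Xb.
Proof.
move=> x hx.
have [B HB] := finite_choice
  (P := fun y B => Xb y -> forall n, B <= n -> y \in letter_iter Th n x)
  (fun y => match classic (Xb y) with
            | or_introl h => let: ex_intro B hB := Th_prim_target h in
                             ex_intro _ B (fun _ => hB x hx)
            | or_intror h => ex_intro _ 0 (fun h' => False_ind _ (h h'))
            end)
  (fun y n n' le h hy m hm => h hy m (leq_trans le hm)).
by exists B.+1 => // y hy; apply: HB.
Qed.

Lemma hocc_theta p a : 0 < p -> forall i, exists E s,
  [/\ p %| E, s < lam ^ E & nth a (letter_iter theta E (fixpt theta p a i)) s = a].
Proof.
move=> hp i; have [K HK] := unif_prim.
have hin : a \in letter_iter theta (p * K) (fixpt theta p a i) by apply: HK; rewrite leq_pmull.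
exists (p * K), (index a (letter_iter theta (p * K) (fixpt theta p a i))); split.
- exact: dvdn_mulr.
- by rewrite -(size_letter_iter Hlen _ (fixpt theta p a i)) index_mem.
- exact: nth_index.
Qed.

Lemma transfer p a p' a' m : 0 < p -> nth a (letter_iter theta p a) 0 = a ->
  0 < p' -> nth a' (letter_iter theta p' a') 0 = a' -> coprime m lam ->
  divides_return_gcd theta p a m -> divides_return_gcd theta p' a' m.
Proof.
move=> hp hfix hp' hfix' co hd.
have colr := coloring Hlen Hlam hp hfix co hd (@hocc_theta p a hp).
have [K HK] := unif_prim.
move=> r hr hret.
set N := p' * (K + r).
set E := p * N.
have hKE : K <= E by rewrite /E /N; nia.
have hrE : r < lam ^ E.
  apply: (leq_trans (ltn_expl r Hlam)); apply: leq_pexp2l; first exact: lam_pos.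
  rewrite /E /N; nia.
have hE' : E = p' * (p * (K + r)) by rewrite /E /N mulnCA.
have hin := HK E hKE a a'.
set q0 := index a' (letter_iter theta E a).
have hq0 : q0 < lam ^ E by rewrite -(size_letter_iter Hlen E a) index_mem.
have h1 : fixpt theta p a q0 = a' by rewrite (fixpt_nth Hlen Hlam hp hfix hq0) nth_index.
have hpE : p %| E by apply: dvdn_mulr.
have hsame : forall t, t < lam ^ E ->
    fixpt theta p a (q0 * lam ^ E + t) = fixpt theta p' a' t.
  move=> t ht; rewrite (fixpt_self Hlen Hlam hp hfix _ hpE ht) h1.
  have ht' : t < lam ^ (p' * (p * (K + r))) by rewrite -hE'.
  rewrite (fixpt_nth Hlen Hlam hp' hfix' ht') -hE'.
  by apply: set_nth_default; rewrite (size_letter_iter Hlen).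
have := hret; rewrite -(hsame _ hrE) -(hsame 0) ?expn_gt0 ?lam_pos // => /(colr _ _).
by move/eqP; rewrite eqn_modDl mod0n.
Qed.

Lemma col_sync_big E k0 j0 S : 0 < k0 -> k0 <= E -> j0 < lam ^ k0 ->
  Xs (column theta k0 j0) -> Xs S -> col E j0 S = column theta k0 j0.
Proof.
move=> hk hkE hj hX hS.
have h0 : 0 < lam ^ (E - k0) by rewrite expn_gt0 lam_pos.
rewrite -(subnK hkE) -{1}(add0n j0) -(mul0n (lam ^ k0)) colD //.
apply: col_sync => //; by case: (col_X hS h0).
Qed.

Lemma transfer_Th p x m : 0 < p -> Xb x -> nth x (letter_iter Th p x) 0 = x ->
  coprime m lam ->
  (divides_return_gcd Th p x m <-> divides_return_gcd theta p x.1 m).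
Proof.
move=> hp hx hfixT co.
have hfix1 : nth x.1 (letter_iter theta p x.1) 0 = x.1.
  by move: hfixT; rewrite Th_iter ?expn_gt0 ?lam_pos // => /(congr1 fst).
split; last first.
  move=> hd r hr; rewrite !fixTh // => -[h _]; exact: hd.
move=> hdT.
have hocc : forall i, exists E s,
  [/\ p %| E, s < lam ^ E & nth x (letter_iter Th E (fixpt Th p x i)) s = x].
  move=> i; have [B HB] := Th_prim_target hx.
  have hy : Xb (fixpt Th p x i) by apply: Xb_closed => //; apply: r_lt_pow.
  have hin : x \in letter_iter Th (p * B) (fixpt Th p x i) by apply: HB => //; rewrite leq_pmull.
  exists (p * B), (index x (letter_iter Th (p * B) (fixpt Th p x i))); split.
  - exact: dvdn_mulr.
  - by rewrite -(size_letter_iter size_Th _ (fixpt Th p x i)) index_mem.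
  - exact: nth_index.
have colr := coloring size_Th Hlam hp hfixT co hdT hocc.
move=> r hr hret.
case: (hx) => -[[k0 [j0 [hk hj eM]]] hmin] _.
have hXM : Xs (column theta k0 j0) by rewrite -eM; case: hx.
set E := p * k0.
have hkE : k0 <= E by rewrite /E leq_pmull.
have hjE : j0 < lam ^ E by apply: (leq_trans hj); apply: leq_pexp2l => //; exact: lam_pos.
have hpE : p %| E by apply: dvdn_mulr.
have key : forall i, Xb (fixpt Th p x i) -> (fixpt Th p x i).1 = x.1 ->
    fixpt Th p x (i * lam ^ E + j0) = (colfun E j0 x.1, x.2).
  move=> i [hXi _] h1.
  rewrite (fixpt_self size_Th Hlam hp hfixT _ hpE hjE) Th_iter // h1 eM.
  by rewrite (@col_sync_big E k0 j0).
have hy : forall i, Xb (fixpt Th p x i) by move=> i; apply: Xb_closed => //; apply: r_lt_pow.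
have h1r : (fixpt Th p x r).1 = x.1 by rewrite fixTh //= hret fixpt0.
have h10 : (fixpt Th p x 0).1 = x.1 by rewrite fixTh //= fixpt0.
have e1 := key r (hy r) h1r.
have e0 := key 0 (hy 0) h10.
have := colr _ _ (etrans e1 (esym e0)).
move/eqP; rewrite eqn_modDr => /eqP /cancel_mod.
by rewrite coprimeXr // mod0n => /(_ isT) /eqP.
Qed.

Lemma fix1_of_Th p x : 0 < p -> nth x (letter_iter Th p x) 0 = x ->
  nth x.1 (letter_iter theta p x.1) 0 = x.1.
Proof. by move=> hp; rewrite Th_iter ?expn_gt0 ?lam_pos // => /(congr1 fst). Qed.

Lemma heights : exists h, is_height theta (fun _ => True) lam h /\ is_height Th Xb lam h.
Proof.
have hfix0 : nth a0 (letter_iter theta 1 a0) 0 = a0 by rewrite letter_iter1.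
have hp1 : 0 < 1 by [].
have [K HK] := unif_prim.
set c := fixpt theta 1 a0 1.
set s := index a0 (letter_iter theta K c).
have hs : s < lam ^ K by rewrite -(size_letter_iter Hlen K c) index_mem HK.
have hr0 : fixpt theta 1 a0 (1 * lam ^ K + s) = fixpt theta 1 a0 0.
  rewrite (fixpt_self Hlen Hlam hp1 hfix0 _ (dvd1n K) hs) fixpt0 //.
  by rewrite nth_index // HK.
have hr0pos : 0 < 1 * lam ^ K + s by rewrite mul1n addn_gt0 expn_gt0 lam_pos.
set S := fun m => [/\ 0 < m, coprime m lam & divides_return_gcd theta 1 a0 m].
have [h [[h0 hco hdiv] hmax]] : exists h, S h /\ forall m, S m -> m <= h.
  apply: (@exists_max S 1 (1 * lam ^ K + s)).
    by split; [| rewrite coprime1n | move=> r _ _; apply: dvd1n].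
  by move=> m [_ _ hd]; apply: dvdn_leq => //; apply: hd.
exists h; split.
- move=> p a hp _ hfix; split=> //.
    exact: (@transfer 1 a0 p a h hp1 hfix0 hp hfix hco hdiv).
  move=> m hm co hd; apply: hmax; split=> //.
  exact: (@transfer p a 1 a0 m hp hfix hp1 hfix0 co hd).
- move=> p x hp hx hfixT.
  have hfix1 := fix1_of_Th hp hfixT.
  split=> //.
    apply/(transfer_Th hp hx hfixT hco).
    exact: (@transfer 1 a0 p x.1 h hp1 hfix0 hp hfix1 hco hdiv).
  move=> m hm co /(transfer_Th hp hx hfixT co) hd; apply: hmax; split=> //.
  exact: (@transfer p x.1 1 a0 m hp hfix1 hp1 hfix0 co hd).
Qed.
End Main.

Unset Implicit Arguments.
Theorem mainTheorem13 (A : finType) (lam : nat) (theta : A -> seq A)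
  (Hlam : 2 <= lam)
  (Hlen : forall a, size (theta a) = lam)
  (Hprim : primitive_on theta (fun _ => True))
  (Ha0 : exists a0, nth a0 (theta a0) 0 = a0)
  (Hinj : injective theta)
  (Hinf : subshift_infinite theta) :
  primitive_on (Theta theta lam) (in_Xbar theta lam) /\
  exists h, is_height theta (fun _ => True) lam h /\
            is_height (Theta theta lam) (in_Xbar theta lam) lam h.
Proof.
have [a0 H0] := Ha0.
split; first exact: (Th_primitive Hlam Hlen Hprim H0).
exact: (heights Hlam Hlen Hprim H0).
Qed.
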